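(* Let $R$ be a t-unital ring and $f\colon L\to M$ a morphism of left $R$-modules whose kernel and cokernel are null-modules. Then (a) the morphism $R\otimes_R f\colon R\otimes_R L\to R\otimes_R M$ is an isomorphism; (b) the morphism $\mathrm{Hom}_R(R,f)\colon \mathrm{Hom}_R(R,L)\to\mathrm{Hom}_R(R,M)$ is an isomorphism.
   Context: Rings are associative, not necessarily unital; modules are not assumed unital. $R$ is t-unital if the multiplication map $R\otimes_R R\to R$ is an isomorphism. A left $R$-module $N$ is a null-module if $rn=0$ for all $r\in R$, $n\in N$. $\mathrm{Hom}_R$ denotes left $R$-module homomorphisms; $\mathrm{Hom}_R(R,L)$ is a left $R$-module via the right action of $R$ on itself. *)

(* Defs.v *)
(* Non-unital rings and non-unital modules are encoded as
   zmodTypes equipped with operations satisfying explicit axioms. *)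
From mathcomp Require Import all_boot all_algebra.
Set Implicit Arguments. Unset Strict Implicit. Unset Printing Implicit Defensive.
Import GRing.Theory.
Local Open Scope ring_scope.

Definition nu_ring (R : zmodType) (mul : R -> R -> R) : Prop :=
  [/\ forall a b c, mul a (mul b c) = mul (mul a b) c,
      forall a b c, mul (a + b) c = mul a c + mul b c &
      forall a b c, mul a (b + c) = mul a b + mul a c].

Definition lmodule (R M : zmodType) (mul : R -> R -> R) (act : R -> M -> M) : Prop :=
  [/\ forall r m m', act r (m + m') = act r m + act r m',
      forall r r' m, act (r + r') m = act r m + act r' m &
      forall r s m, act (mul r s) m = act r (act s m)].

Definition lmod_hom (R L M : zmodType) (actL : R -> L -> L) (actM : R -> M -> M)
  (f : L -> M) : Prop :=
  (forall x y, f (x + y) = f x + f y) /\ (forall r x, f (actL r x) = actM r (f x)).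

Definition null_kernel (R L M : zmodType) (actL : R -> L -> L) (f : L -> M) : Prop :=
  forall r x, f x = 0 -> actL r x = 0.

Definition null_cokernel (R L M : zmodType) (actM : R -> M -> M) (f : L -> M) : Prop :=
  forall r y, exists x, f x = actM r y.

(* ---- The tensor product R (x)_R N, R viewed as a right R-module via mul. ----
   Presented as the free abelian group on R x N (terms modulo the abelian group
   axioms) modulo bilinearity and balancedness relations. *)
Inductive tterm (R N : Type) : Type :=
| TZero
| TGen of R & N
| TAdd of tterm R N & tterm R N
| TOpp of tterm R N.
Arguments TZero {R N}.

Inductive teq (R N : zmodType) (mul : R -> R -> R) (act : R -> N -> N) :
  tterm R N -> tterm R N -> Prop :=
| teq_refl a : teq mul act a a
| teq_sym a b : teq mul act a b -> teq mul act b a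
| teq_trans a b c : teq mul act a b -> teq mul act b c -> teq mul act a c
| teq_add a a' b b' : teq mul act a a' -> teq mul act b b' ->
    teq mul act (TAdd a b) (TAdd a' b')
| teq_opp a a' : teq mul act a a' -> teq mul act (TOpp a) (TOpp a')
| teq_addA a b c : teq mul act (TAdd a (TAdd b c)) (TAdd (TAdd a b) c)
| teq_addC a b : teq mul act (TAdd a b) (TAdd b a)
| teq_add0 a : teq mul act (TAdd TZero a) a
| teq_addN a : teq mul act (TAdd (TOpp a) a) TZero
| teq_linl r r' n : teq mul act (TGen (r + r') n) (TAdd (TGen r n) (TGen r' n))
| teq_linr r n n' : teq mul act (TGen r (n + n')) (TAdd (TGen r n) (TGen r n'))
| teq_bal r s n : teq mul act (TGen (mul r s) n) (TGen r (act s n)).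

Fixpoint tmap (R L M : Type) (f : L -> M) (a : tterm R L) : tterm R M :=
  match a with
  | TZero => TZero
  | TGen r x => TGen r (f x)
  | TAdd a b => TAdd (tmap f a) (tmap f b)
  | TOpp a => TOpp (tmap f a)
  end.

Fixpoint tmul (R : zmodType) (mul : R -> R -> R) (a : tterm R R) : R :=
  match a with
  | TZero => 0
  | TGen r s => mul r s
  | TAdd a b => tmul mul a + tmul mul b
  | TOpp a => - tmul mul a
  end.

Definition t_unital (R : zmodType) (mul : R -> R -> R) : Prop :=
  (forall a b : tterm R R, tmul mul a = tmul mul b -> teq mul mul a b) /\
  (forall r : R, exists a, tmul mul a = r).

Definition tensor_iso (R L M : zmodType) (mul : R -> R -> R)
  (actL : R -> L -> L) (actM : R -> M -> M) (f : L -> M) : Prop :=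
  (forall a b : tterm R L, teq mul actM (tmap f a) (tmap f b) -> teq mul actL a b) /\
  (forall c : tterm R M, exists a, teq mul actM (tmap f a) c).

Definition hom_iso (R L M : zmodType) (mul : R -> R -> R)
  (actL : R -> L -> L) (actM : R -> M -> M) (f : L -> M) : Prop :=
  (forall g1 g2 : R -> L, lmod_hom mul actL g1 -> lmod_hom mul actL g2 ->
     (forall r, f (g1 r) = f (g2 r)) -> forall r, g1 r = g2 r) /\
  (forall h : R -> M, lmod_hom mul actM h ->
     exists g : R -> L, lmod_hom mul actL g /\ forall r, f (g r) = h r).

(* Main.v *)
Require Import Defs.
From mathcomp Require Import all_boot all_algebra.
From Stdlib Require Import Setoid Morphisms.
Set Implicit Arguments. Unset Strict Implicit. Unset Printing Implicit Defensive.
Import GRing.Theory.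
Local Open Scope ring_scope.

Add Parametric Relation (R N : zmodType) (mul : R -> R -> R) (act : R -> N -> N)
  : (tterm R N) (teq mul act)
  reflexivity proved by (@teq_refl R N mul act)
  symmetry proved by (@teq_sym R N mul act)
  transitivity proved by (@teq_trans R N mul act) as teq_rel.

Add Parametric Morphism (R N : zmodType) (mul : R -> R -> R) (act : R -> N -> N)
  : (@TAdd R N) with signature (teq mul act) ==> (teq mul act) ==> (teq mul act) as tadd_mor.
Proof. by move=> *; apply: teq_add. Qed.

Add Parametric Morphism (R N : zmodType) (mul : R -> R -> R) (act : R -> N -> N)
  : (@TOpp R N) with signature (teq mul act) ==> (teq mul act) as topp_mor.
Proof. by move=> *; apply: teq_opp. Qed.



Lemma tadd0r (R N : zmodType) mul act (a : tterm R N) : teq mul act (TAdd a TZero) a.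
Proof. rewrite (teq_addC mul act) (teq_add0 mul act). reflexivity. Qed.

Lemma taddNr (R N : zmodType) mul act (a : tterm R N) : teq mul act (TAdd a (TOpp a)) TZero.
Proof. rewrite (teq_addC mul act) (teq_addN mul act). reflexivity. Qed.

Lemma tcancel (R N : zmodType) mul act (a x : tterm R N) :
  teq mul act (TAdd a x) x -> teq mul act a TZero.
Proof.
move=> H.
rewrite -(tadd0r mul act a) -(taddNr mul act x) (teq_addA mul act) H. reflexivity.
Qed.

Lemma tinv (R N : zmodType) mul act (a x : tterm R N) :
  teq mul act (TAdd a x) TZero -> teq mul act a (TOpp x).
Proof.
move=> H.
rewrite -(tadd0r mul act a) -(taddNr mul act x) (teq_addA mul act) H (teq_add0 mul act).
reflexivity.
Qed.

Lemma topp0 (R N : zmodType) mul act : teq mul act (@TOpp R N TZero) TZero.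
Proof. symmetry; apply: tinv; exact: teq_add0. Qed.

Lemma tinter (R N : zmodType) mul act (a b c d : tterm R N) :
  teq mul act (TAdd (TAdd a b) (TAdd c d)) (TAdd (TAdd a c) (TAdd b d)).
Proof.
rewrite -(teq_addA mul act a) -(teq_addA mul act a).
rewrite (teq_addA mul act b) (teq_addC mul act b c) -(teq_addA mul act c).
reflexivity.
Qed.

Lemma toppD (R N : zmodType) mul act (a b : tterm R N) :
  teq mul act (TOpp (TAdd a b)) (TAdd (TOpp a) (TOpp b)).
Proof.
symmetry; apply: tinv.
rewrite tinter (teq_addN mul act a) (teq_addN mul act b) (teq_add0 mul act).
reflexivity.
Qed.

Lemma tgen0l (R N : zmodType) mul act (n : N) : teq mul act (@TGen R N 0 n) TZero.
Proof.
apply: (@tcancel _ _ _ _ _ (TGen 0 n)).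
rewrite -(teq_linl mul act) addr0. reflexivity.
Qed.

Lemma tgen0r (R N : zmodType) mul act (r : R) : teq mul act (@TGen R N r 0) TZero.
Proof.
apply: (@tcancel _ _ _ _ _ (TGen r 0)).
rewrite -(teq_linr mul act) addr0. reflexivity.
Qed.

Lemma tgenNl (R N : zmodType) mul act (r : R) (n : N) :
  teq mul act (TGen (- r) n) (TOpp (TGen r n)).
Proof. apply: tinv; rewrite -(teq_linl mul act) addNr; exact: tgen0l. Qed.

Lemma addfB (U V : zmodType) (g : U -> V) :
  (forall x y, g (x + y) = g x + g y) -> forall x y, g (x - y) = g x - g y.
Proof. move=> gD x y; apply/(addIr (g y)); by rewrite -gD !subrK. Qed.

Lemma addf0 (U V : zmodType) (g : U -> V) :
  (forall x y, g (x + y) = g x + g y) -> g 0 = 0.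
Proof.
move=> gD; have := addfB gD 0 0; by rewrite !subrr.
Qed.

Lemma addfN (U V : zmodType) (g : U -> V) :
  (forall x y, g (x + y) = g x + g y) -> forall x, g (- x) = - g x.
Proof. move=> gD x; by rewrite -[-x]add0r addfB // addf0 // add0r. Qed.

Fixpoint tgmap (A B C D : Type) (h : A -> B -> tterm C D) (u : tterm A B) : tterm C D :=
  match u with
  | TZero => TZero
  | TGen a b => h a b
  | TAdd u v => TAdd (tgmap h u) (tgmap h v)
  | TOpp u => TOpp (tgmap h u)
  end.

Fixpoint tfold (A B : Type) (V : zmodType) (h : A -> B -> V) (u : tterm A B) : V :=
  match u with
  | TZero => 0
  | TGen a b => h a b
  | TAdd u v => tfold h u + tfold h v
  | TOpp u => - tfold h u
  end.

From Stdlib Require Import IndefiniteDescription.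

Theorem proposition5p6 (R : zmodType) (mul : R -> R -> R)
  (L M : zmodType) (actL : R -> L -> L) (actM : R -> M -> M) (f : L -> M) :
  nu_ring mul -> t_unital mul ->
  lmodule mul actL -> lmodule mul actM ->
  lmod_hom actL actM f ->
  null_kernel actL f -> null_cokernel actM f ->
  tensor_iso mul actL actM f /\ hom_iso mul actL actM f.
Proof.
move=> [mulA mulDl mulDr] [tinj tsurj] [aLD aLDl aLM] [aMD aMDl aMM] [fD fact] Hker Hcok.
have fB := addfB fD.
have [phi Hphi] : exists phi : R -> M -> L, forall t m, f (phi t m) = actM t m.
  exists (fun t m => proj1_sig (constructive_indefinite_description _ (Hcok t m))).
  by move=> t m; case: constructive_indefinite_description.
have [psi Hpsi] : exists psi : R -> tterm R R, forall r, tmul mul (psi r) = r.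
  exists (fun r => proj1_sig (constructive_indefinite_description _ (tsurj r))).
  by move=> r; case: constructive_indefinite_description.
have aLB s := addfB (aLD s).
have aL0 s := addf0 (aLD s).
have aLN s := addfN (aLD s).
have kerE : forall s x y, f x = f y -> actL s x = actL s y.
  move=> s x y fxy; apply/eqP; rewrite -subr_eq0 -aLB; apply/eqP/Hker.
  by rewrite fB fxy subrr.
have Z : forall s k, f k = 0 -> teq mul actL (TGen s k) TZero.
  move=> s k fk; rewrite -(Hpsi s); elim: (psi s) => /= [|a b|u IHu v IHv|u IHu].
  - exact: tgen0l.
  - rewrite (teq_bal mul actL) (Hker b k fk); exact: tgen0r.
  - rewrite (teq_linl mul actL) IHu IHv (teq_add0 mul actL); reflexivity.
  - rewrite (tgenNl mul actL) IHu topp0; reflexivity.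
have E : forall s y y', f y = f y' -> teq mul actL (TGen s y) (TGen s y').
  move=> s y y' fyy; have hk : f (y - y') = 0 by rewrite fB fyy subrr.
  rewrite -[y](subrK y') (teq_linr mul actL) (Z _ _ hk) (teq_add0 mul actL); reflexivity.
pose H m := tgmap (fun s t => @TGen R L s (phi t m)).
have K : forall m u u', tmul mul u = tmul mul u' -> teq mul actL (H m u) (H m u').
  move=> m u u' /tinj; elim; rewrite /H /=.
  - by move=> *; reflexivity.
  - by move=> *; symmetry.
  - by move=> ? ? ? _ h1 _ h2; apply: teq_trans h1 h2.
  - by move=> ? ? ? ? _ h1 _ h2; apply: teq_add.
  - by move=> ? ? _ h1; apply: teq_opp.
  - by move=> *; apply: teq_addA.
  - by move=> *; apply: teq_addC.
  - by move=> *; apply: teq_add0.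
  - by move=> *; apply: teq_addN.
  - by move=> *; apply: teq_linl.
  - move=> s t t'; rewrite -(teq_linr mul actL); apply: E.
    by rewrite fD !Hphi aMDl.
  - move=> r s t; rewrite (teq_bal mul actL); apply: E.
    by rewrite fact !Hphi aMM.
have mul0l s : mul 0 s = 0 := @addf0 _ _ (fun x => mul x s) (fun x y => mulDl x y s).
have mulNl s : forall x, mul (- x) s = - mul x s := @addfN _ _ (fun x => mul x s) (fun x y => mulDl x y s).
have mul0r s : mul s 0 = 0 := @addf0 _ _ (mul s) (mulDr s).
have mulNr s : forall x, mul s (- x) = - mul s x := @addfN _ _ (mul s) (mulDr s).
have HfM : forall m u, teq mul actM (tmap f (H m u)) (TGen (tmul mul u) m).
  rewrite /H => m; elim => /= [|a b|u IHu v IHv|u IHu].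
  - symmetry; exact: tgen0l.
  - rewrite Hphi; symmetry; exact: teq_bal.
  - rewrite IHu IHv (teq_linl mul actM); reflexivity.
  - rewrite IHu (tgenNl mul actM); reflexivity.
have HfL : forall x u, teq mul actL (H (f x) u) (TGen (tmul mul u) x).
  rewrite /H => x; elim => /= [|a b|u IHu v IHv|u IHu].
  - symmetry; exact: tgen0l.
  - rewrite (teq_bal mul actL); apply: E; by rewrite Hphi fact.
  - rewrite IHu IHv (teq_linl mul actL); reflexivity.
  - rewrite IHu (tgenNl mul actL); reflexivity.
have Hadd : forall m m' u, teq mul actL (H (m + m') u) (TAdd (H m u) (H m' u)).
  rewrite /H => m m'; elim => /= [|a b|u IHu v IHv|u IHu].
  - symmetry; exact: teq_add0.
  - rewrite -(teq_linr mul actL); apply: E; by rewrite fD !Hphi aMD.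
  - rewrite IHu IHv tinter; reflexivity.
  - rewrite IHu toppD; reflexivity.
have HRM : forall m s u, teq mul actL (H m (tgmap (fun a b => TGen a (mul b s)) u))
                                    (H (actM s m) u).
  rewrite /H => m s; elim => /= [|a b|u IHu v IHv|u IHu].
  - reflexivity.
  - apply: E; by rewrite !Hphi aMM.
  - rewrite IHu IHv; reflexivity.
  - rewrite IHu; reflexivity.
have tmulRM : forall s u, tmul mul (tgmap (fun a b => TGen a (mul b s)) u) = mul (tmul mul u) s.
  move=> s; elim => /= [|a b|u IHu v IHv|u IHu].
  - by rewrite mul0l.
  - by rewrite mulA.
  - by rewrite IHu IHv mulDl.
  - by rewrite IHu mulNl.
have HD m a b : H m (TAdd a b) = TAdd (H m a) (H m b) by [].
have HN m a : H m (TOpp a) = TOpp (H m a) by [].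
have HZ m : H m TZero = TZero by [].
clearbody H.
pose G := tgmap (fun r m => H m (psi r)).
have Gf : forall c, teq mul actM (tmap f (G c)) c.
  rewrite /G; elim => /= [|r m|u IHu v IHv|u IHu].
  - reflexivity.
  - rewrite HfM Hpsi; reflexivity.
  - rewrite IHu IHv; reflexivity.
  - rewrite IHu; reflexivity.
have fG : forall a, teq mul actL (G (tmap f a)) a.
  rewrite /G; elim => /= [|r x|u IHu v IHv|u IHu].
  - reflexivity.
  - rewrite HfL Hpsi; reflexivity.
  - rewrite IHu IHv; reflexivity.
  - rewrite IHu; reflexivity.
have Gteq : forall c c', teq mul actM c c' -> teq mul actL (G c) (G c').
  move=> c c'; elim; rewrite /G /=.
  - by move=> *; reflexivity.
  - by move=> *; symmetry.
  - by move=> ? ? ? _ h1 _ h2; apply: teq_trans h1 h2.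
  - by move=> ? ? ? ? _ h1 _ h2; apply: teq_add.
  - by move=> ? ? _ h1; apply: teq_opp.
  - by move=> *; apply: teq_addA.
  - by move=> *; apply: teq_addC.
  - by move=> *; apply: teq_add0.
  - by move=> *; apply: teq_addN.
  - move=> r r' m; rewrite -HD; apply: K; by rewrite /= !Hpsi.
  - by move=> r m m'; apply: Hadd.
  - move=> r s m; apply: teq_trans (HRM m s (psi r)); apply: K.
    by rewrite tmulRM !Hpsi.
split.
  split.
  - move=> a b hab; apply: teq_trans (teq_sym (fG a)) _.
    apply: teq_trans (fG b); exact: Gteq.
  - by move=> c; exists (G c); exact: Gf.
split.
- move=> g1 g2 [g1D g1M] [g2D g2M] hf r.
  rewrite -(Hpsi r); elim: (psi r) => /= [|a b|u IHu v IHv|u IHu].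
  + by rewrite (addf0 g1D) (addf0 g2D).
  + rewrite g1M g2M; apply: kerE; exact: hf.
  + by rewrite g1D g2D IHu IHv.
  + by rewrite (addfN g1D) (addfN g2D) IHu.
- move=> h [hD hM].
  pose Phi w := tfold (fun a b => phi a (h b)) w.
  pose Phi2 u := tfold (fun s t => actL s (Phi (psi t))) u.
  have f0 := addf0 fD; have fN := addfN fD; have h0 := addf0 hD; have hN := addfN hD.
  have fPhi : forall w, f (Phi w) = h (tmul mul w).
    rewrite /Phi; elim => /= [|a b|u IHu v IHv|u IHu].
    + by rewrite f0 h0.
    + by rewrite Hphi hM.
    + by rewrite fD hD IHu IHv.
    + by rewrite fN hN IHu.
  have fPhi2 : forall w, f (Phi2 w) = h (tmul mul w).
    rewrite /Phi2; elim => /= [|a b|u IHu v IHv|u IHu].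
    + by rewrite f0 h0.
    + by rewrite fact fPhi Hpsi hM.
    + by rewrite fD hD IHu IHv.
    + by rewrite fN hN IHu.
  have Phi2teq : forall u u', teq mul mul u u' -> Phi2 u = Phi2 u'.
    move=> u u'; elim; rewrite /Phi2 /=.
    + by [].
    + by move=> ? ? _ ->.
    + by move=> ? ? ? _ -> _ ->.
    + by move=> ? ? ? ? _ -> _ ->.
    + by move=> ? ? _ ->.
    + by move=> *; rewrite addrA.
    + by move=> *; rewrite addrC.
    + by move=> *; rewrite add0r.
    + by move=> *; rewrite addNr.
    + by move=> *; rewrite aLDl.
    + move=> s t t'; rewrite -aLD; apply: kerE; by rewrite fD !fPhi !Hpsi hD.
    + move=> r s t; rewrite aLM; apply: kerE; by rewrite fact !fPhi !Hpsi hM.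
  exists (fun r => Phi2 (psi r)); split; [split|].
  + move=> x y.
    have -> : Phi2 (psi x) + Phi2 (psi y) = Phi2 (TAdd (psi x) (psi y)) by [].
    apply: Phi2teq; apply: tinj; by rewrite /= !Hpsi.
  + move=> r x.
    have LM : forall u, Phi2 (tgmap (fun a b => TGen (mul r a) b) u) = actL r (Phi2 u).
      rewrite /Phi2; elim => /= [|a b|u IHu v IHv|u IHu].
      * by rewrite aL0.
      * by rewrite aLM.
      * by rewrite IHu IHv aLD.
      * by rewrite IHu aLN.
    have tLM : forall u, tmul mul (tgmap (fun a b => TGen (mul r a) b) u) = mul r (tmul mul u).
      elim => /= [|a b|u IHu v IHv|u IHu].
      * by rewrite mul0r.
      * by rewrite mulA.
      * by rewrite IHu IHv mulDr.
      * by rewrite IHu mulNr.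
    rewrite -LM; apply: Phi2teq; apply: tinj; by rewrite tLM !Hpsi.
  + by move=> r; rewrite fPhi2 Hpsi.
Qed.
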